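(* Let $F$ be a field of characteristic zero and let $A=A_0\oplus A_1$ be a unitary superalgebra over $F$ such that $A\cong F\dotplus J(A)$ (with $F$ identified with $F\cdot 1$ and $J(A)$ the Jacobson radical of $A$) and $A_0\not\subseteq Z(A)$. Then $Z(A)\cong F\dotplus J'$, where $J'=J(A)\cap Z(A)$. Moreover, if $J'$ is a graded ideal of $A$, then $C^{gr}(A)$ is a $T_2$-ideal of $F\langle Y,Z\rangle$.
   Context: A superalgebra is an associative algebra $A=A_0\oplus A_1$ with $A_iA_j\subseteq A_{i+j \bmod 2}$; $Z(A)$ is the center of $A$. An ideal $I$ is graded if $I=(I\cap A_0)\oplus(I\cap A_1)$. $F\langle Y,Z\rangle$ is the free associative algebra over $F$ on disjoint countable sets $Y=\{y_1,y_2,\dots\}$ (even variables) and $Z=\{z_1,z_2,\dots\}$ (odd variables), graded by the parity of the degree in the $Z$-variables. A polynomial $f(y_1,\dots,y_r,z_1,\dots,z_s)$ is a central graded polynomial of $A$ if it has zero constant term and $f(a_1,\dots,a_r,b_1,\dots,b_s)\in Z(A)$ for all $a_i\in A_0$, $b_j\in A_1$; $C^{gr}(A)$ is the set of all such polynomials. A $T_2$-ideal is an ideal of $F\langle Y,Z\rangle$ invariant under all grading-preserving endomorphisms of $F\langle Y,Z\rangle$. *)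

(* Defs.v *)
From HB Require Import structures.
From mathcomp Require Import all_boot all_order all_algebra.
From mathcomp Require Import finmap.
From mathcomp.multinomials Require Import monalg.
Set Implicit Arguments. Unset Strict Implicit. Unset Printing Implicit Defensive.
Import GRing.Theory.
Local Open Scope ring_scope.

Definition is_ideal (R : pzRingType) (I : R -> Prop) : Prop :=
  [/\ I 0, (forall x y, I x -> I y -> I (x + y)),
      (forall a x, I x -> I (a * x)) & (forall a x, I x -> I (x * a))].

Section AlgebraNotions.
Variables (F : fieldType) (A : algType F).

Definition center (x : A) : Prop := forall y : A, x * y = y * x.

Definition is_left_ideal (I : A -> Prop) : Prop :=
  [/\ I 0, (forall x y, I x -> I y -> I (x + y)) & (forall a x, I x -> I (a * x))].

Definition is_maximal_left_ideal (I : A -> Prop) : Prop :=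
  [/\ is_left_ideal I, ~ I 1 &
      forall K : A -> Prop, is_left_ideal K -> ~ K 1 ->
        (forall x, I x -> K x) -> forall x, K x -> I x].

Definition jacobson (x : A) : Prop :=
  forall I : A -> Prop, is_maximal_left_ideal I -> I x.

Definition is_subspace (V : A -> Prop) : Prop :=
  [/\ V 0, (forall x y, V x -> V y -> V (x + y)) & (forall (k : F) x, V x -> V (k *: x))].

Definition is_superalgebra (A0 A1 : A -> Prop) : Prop :=
  [/\ is_subspace A0, is_subspace A1,
      (forall x, A0 x -> A1 x -> x = 0),
      (forall x, exists x0 x1, [/\ A0 x0, A1 x1 & x = x0 + x1]) &
      [/\ (forall x y, A0 x -> A0 y -> A0 (x * y)),
          (forall x y, A0 x -> A1 y -> A1 (x * y)),
          (forall x y, A1 x -> A0 y -> A1 (x * y)) &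
          (forall x y, A1 x -> A1 y -> A0 (x * y))]].

Definition is_graded (A0 A1 I : A -> Prop) : Prop :=
  forall x, I x -> exists x0 x1, [/\ A0 x0, I x0, A1 x1, I x1 & x = x0 + x1].

End AlgebraNotions.

(* (false, i) is the even variable y_i, (true, i) the odd variable z_i.*)

Definition var := (bool * nat)%type.

Definition FreeAlg (F : fieldType) := {malg F[{fmonom var}]}.

Definition wparity (m : {fmonom var}) : bool := odd (count (fun v : var => v.1) (m : seq var)).

Definition homogeneous (F : fieldType) (b : bool) (f : FreeAlg F) : Prop :=
  forall m, m \in msupp f -> wparity m = b.

Definition peval (F : fieldType) (A : algType F) (ev : var -> A) (f : FreeAlg F) : A :=
  \sum_(m <- msupp f) f@_m *: \prod_(v <- (m : seq var)) ev v.

Definition central_graded (F : fieldType) (A : algType F) (A0 A1 : A -> Prop)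
    (f : FreeAlg F) : Prop :=
  f@_(mone : {fmonom var}) = 0 /\
  forall ev : var -> A,
    (forall i, A0 (ev (false, i))) -> (forall i, A1 (ev (true, i))) ->
    center (peval ev f).

Definition is_T2_ideal (F : fieldType) (I : FreeAlg F -> Prop) : Prop :=
  is_ideal I /\
  forall phi : {lrmorphism FreeAlg F -> FreeAlg F},
    (forall b f, homogeneous b f -> homogeneous b (phi f)) ->
    forall f, I f -> I (phi f).

(* Main.v *)
Require Import Defs.
From HB Require Import structures.
From mathcomp Require Import all_boot all_order all_algebra.
From mathcomp Require Import finmap.
From mathcomp.multinomials Require Import monalg.
From Stdlib Require Import ClassicalEpsilon.
Set Implicit Arguments. Unset Strict Implicit. Unset Printing Implicit Defensive.
Import GRing.Theory.
Local Open Scope ring_scope.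

Section Sub.
Variables (F : fieldType) (A : algType F) (V : A -> Prop).
Hypothesis hV : is_subspace V.

Lemma subN x : V x -> V (- x).
Proof. by case: hV => _ _ hZ Vx; rewrite -scaleN1r; apply: hZ. Qed.
Lemma subB x y : V x -> V y -> V (x - y).
Proof. by case: hV => _ hD _ Vx Vy; apply: hD => //; apply: subN. Qed.
Lemma sub0 : V 0. Proof. by case: hV. Qed.
Lemma subD x y : V x -> V y -> V (x + y). Proof. by case: hV => _ hD _; apply: hD. Qed.
Lemma subZ k x : V x -> V (k *: x). Proof. by case: hV => _ _ hZ; apply: hZ. Qed.
End Sub.

Section Center.
Variables (F : fieldType) (A : algType F).
Lemma center0 : center (0 : A). Proof. by move=> y; rewrite mul0r mulr0. Qed.
Lemma centerD (x y : A) : center x -> center y -> center (x + y).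
Proof. by move=> hx hy z; rewrite mulrDl mulrDr hx hy. Qed.
Lemma centerN (x : A) : center x -> center (- x).
Proof. by move=> hx z; rewrite mulNr mulrN hx. Qed.
Lemma centerB (x y : A) : center x -> center y -> center (x - y).
Proof. by move=> hx hy; apply: centerD => //; apply: centerN. Qed.
Lemma centerZ k (x : A) : center x -> center (k *: x).
Proof. by move=> hx z; rewrite -scalerAl -scalerAr hx. Qed.
Lemma centerC k : center (k%:A : A).
Proof. by move=> z; rewrite mulr_algl mulr_algr. Qed.
End Center.

Section Jac.
Variables (F : fieldType) (A : algType F).
Lemma jac0 : jacobson (0 : A).
Proof. by move=> I [[]]. Qed.
Lemma jacD (x y : A) : jacobson x -> jacobson y -> jacobson (x + y).
Proof. by move=> hx hy I hI; case: (hI) => [[_ hD _]] _ _; apply: hD; [apply: hx|apply: hy]. Qed.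
Lemma jacMl (a x : A) : jacobson x -> jacobson (a * x).
Proof. by move=> hx I hI; case: (hI) => [[_ _ hM]] _ _; apply: hM; apply: hx. Qed.
Lemma jacZ k (x : A) : jacobson x -> jacobson (k *: x).
Proof. by move=> hx; rewrite -mulr_algl; apply: jacMl. Qed.
Lemma jacN (x : A) : jacobson x -> jacobson (- x).
Proof. by move=> hx; rewrite -scaleN1r; apply: jacZ. Qed.
Lemma jacB (x y : A) : jacobson x -> jacobson y -> jacobson (x - y).
Proof. by move=> hx hy; apply: jacD => //; apply: jacN. Qed.

Hypothesis hdec : forall a : A, exists (k : F) (j : A), jacobson j /\ a = k%:A + j.
Lemma jacMr (x a : A) : jacobson x -> jacobson (x * a).
Proof.
move=> hx; have [k [j [hj ->]]] := hdec a.
rewrite mulrDr mulr_algr; apply: jacD; [exact: jacZ | exact: jacMl].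
Qed.

Lemma jac_prod (s : seq (bool * nat)) (e1 e2 : bool * nat -> A) :
  (forall v, jacobson (e1 v - e2 v)) ->
  jacobson (\prod_(v <- s) e1 v - \prod_(v <- s) e2 v).
Proof.
move=> he; elim: s => [|v s IH]; first by rewrite !big_nil subrr; apply: jac0.
rewrite !big_cons.
have -> : e1 v * \prod_(j <- s) e1 j - e2 v * \prod_(j <- s) e2 j =
  (e1 v - e2 v) * \prod_(j <- s) e1 j + e2 v * (\prod_(j <- s) e1 j - \prod_(j <- s) e2 j).
  by rewrite mulrBl mulrBr addrA subrK.
apply: jacD; [exact: jacMr | exact: jacMl].
Qed.
End Jac.


Section Sigma.
Variables (F : fieldType) (A : algType F) (A0 A1 : A -> Prop).
Hypothesis hS : is_superalgebra A0 A1.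
Hypothesis hF : [pchar F] =i pred0.

Lemma s0 : is_subspace A0. Proof. by case: hS. Qed.
Lemma s1 : is_subspace A1. Proof. by case: hS. Qed.
Lemma sI x : A0 x -> A1 x -> x = 0. Proof. by case: hS => _ _ h _ _; apply: h. Qed.
Lemma s00 x y : A0 x -> A0 y -> A0 (x * y). Proof. by case: hS => _ _ _ _ [h]; move=> *; apply: h. Qed.
Lemma s01 x y : A0 x -> A1 y -> A1 (x * y). Proof. by case: hS => _ _ _ _ [_ h]; move=> *; apply: h. Qed.
Lemma s10 x y : A1 x -> A0 y -> A1 (x * y). Proof. by case: hS => _ _ _ _ [_ _ h]; move=> *; apply: h. Qed.
Lemma s11 x y : A1 x -> A1 y -> A0 (x * y). Proof. by case: hS => _ _ _ _ [_ _ _ h]; move=> *; apply: h. Qed.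

Lemma dec_uniq u w u' w' : A0 u -> A1 w -> A0 u' -> A1 w' -> u + w = u' + w' ->
  u = u' /\ w = w'.
Proof.
move=> hu hw hu' hw' e.
have h : u - u' = w' - w by apply/eqP; rewrite subr_eq addrAC [w' + u']addrC -e addrK.
have z : u - u' = 0 by apply: sI; [exact: (subB s0) | rewrite h; exact: (subB s1)].
split; first by apply/eqP; rewrite -subr_eq0 z.
by apply/eqP; rewrite eq_sym -subr_eq0 -h z.
Qed.

Lemma one_even : A0 1.
Proof.
case: hS => _ _ _ hd _; have [e0 [e1 [h0 h1 e]]] := hd 1.
have e0e1 : e0 * e1 = 0.
  have := mulr1 e0; rewrite {1}e mulrDr => E.
  have [_ ] := dec_uniq (s00 h0 h0) (s01 h0 h1) h0 (sub0 s1) (etrans E (esym (addr0 e0))).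
  by [].
have e1e1 : A0 e1.
  have := mul1r e1; rewrite {1}e mulrDl e0e1 add0r => E.
  rewrite -E; exact: s11.
have z : e1 = 0 by apply: sI.
by rewrite e z addr0.
Qed.

Lemma decEx (x : A) : exists p : A * A, [/\ A0 p.1, A1 p.2 & x = p.1 + p.2].
Proof. by case: hS => _ _ _ hd _; have [x0 [x1 h]] := hd x; exists (x0, x1). Qed.

Definition dec (x : A) : A * A := proj1_sig (constructive_indefinite_description _ (decEx x)).

Lemma decP x : [/\ A0 (dec x).1, A1 (dec x).2 & x = (dec x).1 + (dec x).2].
Proof. exact: (proj2_sig (constructive_indefinite_description _ (decEx x))). Qed.

Definition sig (x : A) := (dec x).1 - (dec x).2.

Lemma sigE u w : A0 u -> A1 w -> sig (u + w) = u - w.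
Proof.
move=> hu hw; rewrite /sig; case: (decP (u + w)) => h0 h1 e.
by have [-> ->] := dec_uniq h0 h1 hu hw (esym e).
Qed.

Lemma sig_split x : exists u w, [/\ A0 u, A1 w & x = u + w].
Proof. by case: (decP x) => h0 h1 e; exists (dec x).1, (dec x).2. Qed.

Lemma sigD x y : sig (x + y) = sig x + sig y.
Proof.
have [u [w [hu hw ->]]] := sig_split x; have [u' [w' [hu' hw' ->]]] := sig_split y.
rewrite addrACA !sigE //; [|exact: (subD s0)|exact: (subD s1)].
by rewrite opprD addrACA.
Qed.

Lemma sigM x y : sig (x * y) = sig x * sig y.
Proof.
have [u [w [hu hw ->]]] := sig_split x; have [u' [w' [hu' hw' ->]]] := sig_split y.
have -> : (u + w) * (u' + w') = (u * u' + w * w') + (u * w' + w * u').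
  by rewrite mulrDl !mulrDr [w * u' + w * w']addrC addrACA.
rewrite !sigE //; last 2 first.
- by apply: (subD s0); [apply: s00|apply: s11].
- by apply: (subD s1); [apply: s01|apply: s10].
by rewrite mulrBl !mulrBr opprB opprD addrACA.
Qed.

Lemma sigK x : sig (sig x) = x.
Proof.
have [u [w [hu hw ->]]] := sig_split x.
by rewrite sigE // sigE ?opprK //; apply: (subN s1).
Qed.

Lemma sig1 : sig 1 = 1.
Proof. by have := sigE one_even (sub0 s1); rewrite addr0 subr0. Qed.

Lemma sig_even x : A0 x -> sig x = x.
Proof. by move=> h; have := sigE h (sub0 s1); rewrite addr0 subr0. Qed.
Lemma sig_odd x : A1 x -> sig x = - x.
Proof. by move=> h; have := sigE (sub0 s0) h; rewrite add0r sub0r. Qed.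

Lemma sig0 : sig 0 = 0.
Proof. by have := sigE (sub0 s0) (sub0 s1); rewrite addr0 subr0. Qed.

Definition sigI (I : A -> Prop) := fun y => I (sig y).

Lemma sigI_left I : is_left_ideal I -> is_left_ideal (sigI I).
Proof.
case=> h0 hD hM; split; rewrite /sigI.
- by rewrite sig0.
- by move=> x y hx hy; rewrite sigD; apply: hD.
- by move=> a x hx; rewrite sigM; apply: hM.
Qed.

Lemma sigI_max I : is_maximal_left_ideal I -> is_maximal_left_ideal (sigI I).
Proof.
case=> hI h1 hmax; split.
- exact: sigI_left.
- by rewrite /sigI sig1.
move=> K hK hK1 sub x Kx.
have := hmax (sigI K) (sigI_left hK); rewrite /sigI sig1 => /(_ hK1).
move=> h; apply: h; last by rewrite sigK.
by move=> y Iy; apply: sub; rewrite /sigI sigK.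
Qed.

Lemma jac_sig j : jacobson j -> jacobson (sig j).
Proof. by move=> hj I hI; apply: (hj (sigI I)); apply: sigI_max. Qed.

Lemma odd_scalar x k : A1 x -> jacobson (x - k%:A) -> jacobson ((- (k *+ 2))%:A : A).
Proof.
move=> hx hj; have := jac_sig hj.
have -> : sig (x - k%:A) = - x - k%:A.
  rewrite sigD sig_odd //; congr (_ + _).
  rewrite sig_even //; apply: (subN s0); apply: (subZ s0); exact: one_even.
move=> hj2; have := jacD hj hj2.
by rewrite addrACA subrr add0r -opprD -mulr2n scaleNr scalerMnl.
Qed.
End Sigma.


Section PolyArg.
Variables (F : fieldType) (A : algType F).

Lemma halgE (y : A) (p : {poly F}) :
  horner_alg y p = \sum_(i < size p) p`_i *: y ^+ i.
Proof.
rewrite -{1}[p]coefK poly_def linear_sum; apply: eq_bigr => i _.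
by rewrite linearZ /= rmorphXn /= horner_algX mulr_algl.
Qed.

Lemma halg_comp (x : A) (p r : {poly F}) :
  horner_alg x (p \Po r) = horner_alg (horner_alg x r) p.
Proof.
rewrite comp_polyE [RHS]halgE linear_sum; apply: eq_bigr => i _.
by rewrite linearZ /= rmorphXn mulr_algl.
Qed.

Lemma coefX1n (i k : nat) : (('X + 1) ^+ i : {poly F})`_k = ('C(i, k))%:R.
Proof.
elim: i k => [|i IH] k.
  by rewrite expr0 coef1; case: k.
rewrite exprSr mulrDr mulr1 coefD coefMX; case: k => [|k] /=.
  by rewrite IH !bin0 add0r.
by rewrite !IH binS natrD addrC.
Qed.

Definition Dq (q : {poly F}) := q \Po ('X + 1) - q.

Lemma coef_Dq (q : {poly F}) k :
  (Dq q)`_k = \sum_(i < size q) q`_i * ('C(i, k))%:R - q`_k.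
Proof.
rewrite /Dq coefB coef_comp_poly; congr (_ - _); apply: eq_bigr => i _.
by rewrite coefX1n.
Qed.

Hypothesis hF : [pchar F] =i pred0.

Lemma size_Dq n (q : {poly F}) : size q = n.+3 -> size (Dq q) = n.+2.
Proof.
move=> sq.
have lc : q`_n.+2 != 0.
  by have := lead_coef_eq0 q; rewrite lead_coefE sq /= => ->; rewrite -size_poly_eq0 sq.
apply/eqP; rewrite eqn_leq; apply/andP; split.
  apply/leq_sizeP => j hj; rewrite coef_Dq sq big_ord_recr /=.
  rewrite big1 ?add0r; last first.
    by move=> i _; rewrite bin_small ?mulr0 // (leq_trans (ltn_ord i)).
  move: hj; rewrite leq_eqVlt => /orP [/eqP <-|hj].
    by rewrite binn mulr1 subrr.
  rewrite bin_small // mulr0 sub0r.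
  by rewrite nth_default ?oppr0 // sq.
rewrite ltnNge; apply/negP => /leq_sizeP /(_ n.+1 (leqnn _)).
rewrite coef_Dq sq !big_ord_recr /= big1; last first.
  by move=> i _; rewrite bin_small ?mulr0 // (leq_trans (ltn_ord i)).
rewrite add0r binn mulr1 binSn bin_small // mulr0 add0r addrAC subrr add0r => /eqP.
rewrite mulf_eq0 (negbTE lc) /=.
by move/pcharf0P: hF => ->.
Qed.

Variables (A0 : A -> Prop).
Hypothesis hA0 : is_subspace A0.
Hypothesis h1 : A0 1.
Variable a : A.
Hypothesis ha : A0 a.
Hypothesis hna : ~ center a.

Definition PP (q : {poly F}) := forall x, A0 x -> center (horner_alg x q).

Lemma PP_Dq q : PP q -> PP (Dq q).
Proof.
move=> hq x hx; rewrite /Dq rmorphB /= halg_comp rmorphD /= horner_algX rmorph1.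
apply: centerB; apply: hq => //; exact: (subD hA0 hx h1).
Qed.

Lemma PP_const q : PP q -> (size q <= 1)%N.
Proof.
move=> hq; rewrite leqNgt; apply/negP => hs.
suff : forall n (q : {poly F}), size q = n.+2 -> PP q -> False.
  move/(_ (size q).-2 q); apply=> //; move: hs; case: (size q) => [|[|m]] //.
elim=> [|n IH] {hq hs} q sq hq.
  have := hq a ha; rewrite halgE sq !big_ord_recr big_ord0 /= add0r expr0 expr1.
  have lc : q`_1 != 0.
    by have := lead_coef_eq0 q; rewrite lead_coefE sq /= => ->; rewrite -size_poly_eq0 sq.
  move=> hc; apply: hna.
  have := centerB hc (@centerC F A q`_0); rewrite addrAC subrr add0r => /(centerZ (q`_1)^-1).
  by rewrite scalerA mulVf // scale1r.
exact: (IH (Dq q) (size_Dq sq) (PP_Dq hq)).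
Qed.
End PolyArg.


Section Free.
Variables (F : fieldType) (A : algType F).

Definition hev (ev : var -> A) (m : {fmonom var}) : A := \prod_(v <- (m : seq var)) ev v.

Lemma hevM ev m1 m2 : hev ev (mmul m1 m2) = hev ev m1 * hev ev m2.
Proof. by rewrite /hev fmM big_cat. Qed.

Lemma pevalE (ev : var -> A) (f : FreeAlg F) : peval ev f = mmap (in_alg A) (hev ev) f.
Proof. by rewrite /peval mmapE; apply: eq_bigr => m _; rewrite /= mulr_algl. Qed.

Lemma pevalD (ev : var -> A) (f g : FreeAlg F) : peval ev (f + g) = peval ev f + peval ev g.
Proof. by rewrite !pevalE raddfD. Qed.

Lemma peval0 (ev : var -> A) : peval ev (0 : FreeAlg F) = 0.
Proof. by rewrite pevalE raddf0. Qed.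

Lemma pevalM (ev : var -> A) (f g : FreeAlg F) : peval ev (f * g) = peval ev f * peval ev g.
Proof.
rewrite !pevalE malgME raddf_sum mulr_suml /=; apply: eq_bigr=> i _.
rewrite raddf_sum mulr_sumr /=; apply: eq_bigr=> j _.
by rewrite mmapU /= hevM !mulr_algl -scalerAl -scalerAr scalerA.
Qed.

Lemma pevalZ (ev : var -> A) k (f : FreeAlg F) : peval ev (k *: f) = k *: peval ev f.
Proof.
rewrite -mul_malgC pevalM.
have -> : peval ev k%:MP = k%:A by rewrite pevalE mmapU /= /hev fm1 big_nil mulr1.
by rewrite mulr_algl.
Qed.

Lemma peval_sum (ev : var -> A) (I : Type) (r : seq I) (G : I -> FreeAlg F) :
  peval ev (\sum_(i <- r) G i) = \sum_(i <- r) peval ev (G i).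
Proof. by apply: (big_morph _ (pevalD ev) (peval0 ev)). Qed.

Lemma peval1 (ev : var -> A) : peval ev (1 : FreeAlg F) = 1.
Proof. by rewrite pevalE -mpolyC1E mmapU /= /hev fm1 big_nil mulr1 scale1r. Qed.

Lemma peval_prod (ev : var -> A) (I : Type) (r : seq I) (G : I -> FreeAlg F) :
  peval ev (\prod_(i <- r) G i) = \prod_(i <- r) peval ev (G i).
Proof. by apply: (big_morph _ (pevalM ev) (peval1 ev)). Qed.

Lemma monU (s : seq var) :
  << (FMonom s : {fmonom var}) >> = \prod_(v <- s) (<< FMonom [:: v] >> : FreeAlg F).
Proof.
elim: s => [|v s IH].
  have -> : FMonom [::] = mone :> {fmonom var} by apply: val_inj; rewrite /= fm1.
  by rewrite big_nil; exact: mpolyC1E.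
have -> : FMonom (v :: s) = mmul (FMonom [:: v]) (FMonom s) :> {fmonom var}.
  by apply: val_inj; rewrite /= fmM.
by rewrite big_cons -IH malgM_def fgmulUU mulr1.
Qed.

Lemma malgU_scale (c : F) (m : {fmonom var}) : << c *g m >> = c *: (<< m >> : FreeAlg F).
Proof. by rewrite -mul_malgC malgM_def fgmulUU mulr1 mul1m. Qed.

Lemma expand (phi : {lrmorphism FreeAlg F -> FreeAlg F}) (f : FreeAlg F) :
  phi f = \sum_(m <- msupp f) f@_m *: \prod_(v <- (m : seq var)) phi << FMonom [:: v] >>.
Proof.
rewrite {1}(monalgE f) raddf_sum; apply: eq_bigr => m _.
rewrite malgU_scale; transitivity (f@_m *: phi <<m>>); first exact: linearZ_LR.
by rewrite -[m]fmK monU rmorph_prod.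
Qed.

Lemma peval_phi (ev : var -> A) (phi : {lrmorphism FreeAlg F -> FreeAlg F}) (f : FreeAlg F) :
  peval ev (phi f) = peval (fun v => peval ev (phi << FMonom [:: v] >>)) f.
Proof.
rewrite expand peval_sum /peval; apply: eq_bigr => m _.
by rewrite -/(peval _ _) pevalZ peval_prod.
Qed.

Lemma peval_zero (ev : var -> A) (g : FreeAlg F) :
  (forall v, ev v = 0) -> peval ev g = (g@_mone)%:A.
Proof.
move=> h0.
have -> : g@_mone = \sum_(m <- msupp g) g@_m *+ (m == mone).
  by rewrite {1}(monalgE g) raddf_sum; apply: eq_bigr => m _; exact: mcoeffU.
rewrite /peval scaler_suml; apply: eq_bigr => m _.
case: m => [[|v s]].
  rewrite big_nil.
  have -> : FMonom [::] = mone :> {fmonom var} by apply: val_inj; rewrite /= fm1.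
  by rewrite eqxx mulr1n.
rewrite big_cons h0 mul0r scaler0.
have -> : (FMonom (v :: s) == mone) = false.
  by apply/negbTE; rewrite fmP fm1.
by rewrite mulr0n scale0r.
Qed.

Lemma homU (v : var) : homogeneous v.1 (<< FMonom [:: v] >> : FreeAlg F).
Proof.
move=> m; rewrite msuppU1 inE => /eqP ->.
by rewrite /wparity /= addn0 oddb.
Qed.

Variables (A0 A1 : A -> Prop).
Hypothesis hS : is_superalgebra A0 A1.
Hypothesis h1 : A0 1.

Definition Apar (b : bool) := if b then A1 else A0.

Lemma par_prod (ev : var -> A) (s : seq var) :
  (forall v, Apar v.1 (ev v)) ->
  Apar (odd (count (fun v : var => v.1) s)) (\prod_(v <- s) ev v).
Proof.
move=> hev; elim: s => [|v s IH]; first by rewrite big_nil.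
rewrite big_cons /= oddD; move: (hev v) IH.
case: hS => _ _ _ _ [h00 h01 h10 h11].
by case: (v.1); case: (odd _); rewrite /Apar /= => ha hb; auto.
Qed.

Lemma par_peval (ev : var -> A) (b : bool) (g : FreeAlg F) :
  (forall v, Apar v.1 (ev v)) -> homogeneous b g -> Apar b (peval ev g).
Proof.
move=> hev hg.
have hsub : is_subspace (Apar b) by case: hS => h0 h1' _ _ _; rewrite /Apar; case: ifP.
rewrite /peval big_seq; apply: (big_ind (Apar b)).
- exact: (sub0 hsub).
- by move=> x y; apply: (subD hsub).
move=> m hm; apply: (subZ hsub); have := par_prod (m : seq var) hev.
by rewrite -/(wparity m) hg.
Qed.
End Free.


Section Main.
Variables (F : fieldType) (A : algType F) (A0 A1 : A -> Prop).
Hypothesis hF : [pchar F] =i pred0.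
Hypothesis hS : is_superalgebra A0 A1.
Hypothesis hdec : forall a : A, exists (k : F) (j : A), jacobson j /\ a = k%:A + j.
Hypothesis hJ : forall k : F, jacobson (k%:A : A) -> k = 0.
Variable a : A.
Hypothesis ha : A0 a.
Hypothesis hna : ~ center a.

Lemma w_exists (ev : var -> A) : exists w : var -> F, forall v, jacobson (ev v - (w v)%:A).
Proof.
have ex v : exists k : F, jacobson (ev v - k%:A).
  by have [k [j [hj e]]] := hdec (ev v); exists k; rewrite e addrC addKr.
exists (fun v => proj1_sig (constructive_indefinite_description _ (ex v))).
by move=> v; exact: (proj2_sig (constructive_indefinite_description _ (ex v))).
Qed.

Lemma odd_zero x k : A1 x -> jacobson (x - k%:A) -> k = 0.
Proof.
move=> hx hj; have := hJ (odd_scalar hS hx hj) => /eqP.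
rewrite oppr_eq0 -mulr_natr mulf_eq0 => /orP [/eqP //|].
by move/pcharf0P: hF => ->.
Qed.

Lemma prodZ (w : var -> F) (x : A) (s : seq var) :
  \prod_(v <- s) (w v *: x) = (\prod_(v <- s) w v) *: x ^+ (size s).
Proof.
elim: s => [|v s IH]; first by rewrite !big_nil expr0 scale1r.
by rewrite !big_cons IH /= exprS -scalerAl -scalerAr scalerA.
Qed.

Lemma graded_par (ev : var -> A) :
  (forall i, A0 (ev (false, i))) -> (forall i, A1 (ev (true, i))) ->
  forall v, Apar A0 A1 v.1 (ev v).
Proof. by move=> h0 h1 [[] i]; rewrite /Apar /=. Qed.

Lemma Jval (f : FreeAlg F) (ev : var -> A) :
  central_graded A0 A1 f ->
  (forall i, A0 (ev (false, i))) -> (forall i, A1 (ev (true, i))) ->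
  jacobson (peval ev f).
Proof.
move=> [f1 fc] he ho.
have [w hw] := w_exists ev.
have hw1 i : w (true, i) = 0 by apply: (odd_zero (ho i) (hw _)).
pose q : {poly F} := \sum_(m <- msupp f) (f@_m * \prod_(v <- (m : seq var)) w v) *: 'X^(size (m : seq var)).
have E (x : A) : peval (fun v => w v *: x) f = horner_alg x q.
  rewrite /peval /q linear_sum; apply: eq_bigr => m _.
  by rewrite linearZ /= rmorphXn /= horner_algX mulr_algl prodZ scalerA.
have Pq : PP A0 q.
  move=> x hx; rewrite -E; apply: fc => i.
    by apply: (subZ (s0 hS)).
  by rewrite hw1 scale0r; apply: (sub0 (s1 hS)).
have := PP_const hF (s0 hS) (one_even hS) ha hna Pq => /size1_polyC eq.
have Z1 : peval (fun v => w v *: (1 : A)) f = 0.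
  rewrite (E 1) eq horner_algC -[X in X = 0](horner_algC (0 : A)) -eq -(E 0).
  by rewrite (peval_zero _ (fun v => scaler0 _ _)) f1 scale0r.
have D : jacobson (peval ev f - peval (fun v => w v *: (1 : A)) f).
  rewrite /peval -sumrB big_seq; apply: (big_ind (fun x : A => jacobson x)); first exact: jac0.
    by move=> x y; apply: jacD.
  move=> m _; rewrite -scalerBr; apply: jacZ; apply: (jac_prod hdec).
  exact: hw.
by rewrite Z1 subr0 in D.
Qed.
End Main.


Theorem proposition2p2 (F : fieldType) (A : algType F) (A0 A1 : A -> Prop) :
  [pchar F] =i pred0 ->
  is_superalgebra A0 A1 ->
  (* A = F.1 (+) J(A) *)
  (forall a : A, exists (k : F) (j : A), jacobson j /\ a = k%:A + j) ->
  (forall k : F, jacobson (k%:A : A) -> k = 0) ->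
  (* A0 is not contained in Z(A) *)
  (exists a : A, A0 a /\ ~ center a) ->
  (* Z(A) = F.1 (+) J', with J' = J(A) cap Z(A) *)
  ((forall k : F, center (k%:A : A)) /\
   (forall k : F, jacobson (k%:A : A) /\ center (k%:A : A) -> k = 0) /\
   (forall z : A, center z ->
      exists (k : F) (j : A), [/\ jacobson j, center j & z = k%:A + j]))
  /\
  (is_ideal (fun x : A => jacobson x /\ center x) ->
   is_graded A0 A1 (fun x : A => jacobson x /\ center x) ->
   is_T2_ideal (central_graded A0 A1)).
Proof.
move=> hF hS hdec hJ [a [ha hna]].
split.
  split; first exact: centerC.
  split; first by move=> k [hk _]; apply: hJ.
  move=> z hz; have [k [j [hj e]]] := hdec z.
  exists k, j; split => //.
  have -> : j = z - k%:A by rewrite e addrC addKr.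
  by apply: centerB => //; apply: centerC.
move=> [hI0 hID hIl hIr] _.
have Jv := Jval hF hS hdec hJ ha hna.
have cmul := (@mcoeff1g_is_multiplicative {fmonom var} F).1.
split; first split.
- split; first by rewrite mcoeff0.
  by move=> ev _ _; rewrite peval0; apply: center0.
- move=> f g [f1 fc] [g1 gc]; split; first by rewrite mcoeffD f1 g1 addr0.
  by move=> ev h0 h1; rewrite pevalD; apply: centerD; [apply: fc | apply: gc].
- move=> g f [f1 fc]; split; first by rewrite cmul f1 mulr0.
  move=> ev h0 h1; rewrite pevalM.
  by have [] := hIl (peval ev g) _ (conj (Jv _ _ (conj f1 fc) h0 h1) (fc _ h0 h1)).
- move=> g f [f1 fc]; split; first by rewrite cmul f1 mul0r.
  move=> ev h0 h1; rewrite pevalM.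
  by have [] := hIr (peval ev g) _ (conj (Jv _ _ (conj f1 fc) h0 h1) (fc _ h0 h1)).
move=> phi hhom f [f1 fc].
have ev''gr (ev : var -> A) :
    (forall i, A0 (ev (false, i))) -> (forall i, A1 (ev (true, i))) ->
    (forall i, A0 (peval ev (phi << FMonom [:: (false, i)] >>))) /\
    (forall i, A1 (peval ev (phi << FMonom [:: (true, i)] >>))).
  move=> h0 h1; have gp := @graded_par F A A0 A1 ev h0 h1.
  split => i.
    exact: (par_peval hS (one_even hS) gp (hhom _ _ (@homU F (false, i)))).
  exact: (par_peval hS (one_even hS) gp (hhom _ _ (@homU F (true, i)))).
split.
  have z0 : forall i, A0 ((fun _ : var => 0 : A) (false, i)) by move=> i; apply: (sub0 (s0 hS)).
  have z1 : forall i, A1 ((fun _ : var => 0 : A) (true, i)) by move=> i; apply: (sub0 (s1 hS)).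
  have [g0 g1] := ev''gr (fun _ : var => 0 : A) z0 z1.
  have := Jv f (fun v => peval (fun _ : var => 0 : A) (phi << FMonom [:: v] >>)) (conj f1 fc) g0 g1.
  rewrite -peval_phi (peval_zero _ (fun v => erefl)).
  exact: hJ.
move=> ev h0 h1; rewrite peval_phi.
by have [g0 g1] := ev''gr _ h0 h1; apply: fc.
Qed.
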